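(* Let $\alpha>0$, $\lambda=2\alpha/(\alpha+\sqrt{\alpha^2+4L\alpha})$, $y_0\in\mathrm{dom}\, h$, and run TAA: $s_0=\nabla f(y_0)$, $x_0=\mathrm{argmin}_x\{\langle s_0,x\rangle+h^\alpha(x)\}$, and for $k\ge0$: $\tilde x_{k+1}=(1-\lambda)y_k+\lambda x_k$, $s_{k+1}=(1-\lambda)s_k+\lambda\nabla f(\tilde x_{k+1})$, $x_{k+1}=\mathrm{argmin}_x\{\langle s_{k+1},x\rangle+h^\alpha(x)\}$, $y_{k+1}=(1-\lambda)y_k+\lambda x_{k+1}$. Let $\Gamma_k$ be the ACP model induced by $(y_0,\{\tilde x_{i+1}\}_{i=0}^{k-1},(\lambda,\dots,\lambda))$. Then for all $k\ge0$, $\min_{x\in\mathbb{R}^n}\Gamma_k(x)\ge\phi^\alpha(y_k)-(1-\lambda)^k\Delta$, where $\Delta=\phi^\alpha(y_0)-\Gamma_0(x_0)$.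
   Context: Let $\|\cdot\|$ be a norm on $\mathbb{R}^n$. Let $f:\mathbb{R}^n\to\mathbb{R}$ be convex, differentiable and $L$-smooth ($L>0$) with respect to $\|\cdot\|$, $h:\mathbb{R}^n\to(-\infty,\infty]$ closed proper convex with bounded domain, and $w:\mathbb{R}^n\to[0,+\infty]$ closed, $1$-strongly convex with respect to $\|\cdot\|$ on $\mathrm{dom}\, h$, with $\max_{\mathrm{dom}\, h}w<\infty$. Let $h^\alpha=h+\alpha w$, $\phi^\alpha=f+h^\alpha$, $\ell_f(x;x_0)=f(x_0)+\langle\nabla f(x_0),x-x_0\rangle$. The ACP model induced by $(y_0,\{p_i\}_{i=0}^{k-1},\zeta)$, $\zeta\in[0,1]^k$, is $\Gamma_0(x)=h^\alpha(x)+\ell_f(x;y_0)$, $\Gamma_{j+1}(x)=(1-\zeta_j)\Gamma_j(x)+\zeta_j(h^\alpha(x)+\ell_f(x;p_j))$. *)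

(* Defs.v *)
From HB Require Import structures.
From mathcomp Require Import all_boot all_order all_algebra.
From mathcomp Require Import all_classical all_reals all_analysis.
Set Implicit Arguments. Unset Strict Implicit. Unset Printing Implicit Defensive.
Import Order.TTheory GRing.Theory Num.Theory.
Import numFieldNormedType.Exports.
Local Open Scope ring_scope.
Local Open Scope classical_set_scope.

Section Defs.
Context {R : realType} {n : nat}.
Notation vec := 'rV[R]_n.

Definition dotv (s x : vec) : R := \sum_(i < n) s 0 i * x 0 i.

Definition is_norm (N : vec -> R) : Prop :=
  [/\ forall x, 0 <= N x,
      forall x, N x = 0 -> x = 0,
      forall (a : R) x, N (a *: x) = `|a| * N x &
      forall x y, N (x + y) <= N x + N y].

Definition convex_fun (f : vec -> R) : Prop :=
  forall x y (t : R), 0 <= t <= 1 ->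
    f (t *: x + (1 - t) *: y) <= t * f x + (1 - t) * f y.

Definition has_gradient (N : vec -> R) (f : vec -> R) (g : vec -> vec) : Prop :=
  forall x (eps : R), 0 < eps -> exists2 delta : R, 0 < delta &
    forall d, N d < delta -> `|f (x + d) - f x - dotv (g x) d| <= eps * N d.

(* L-smoothness w.r.t. N: ||g x - g y||_* <= L ||x - y||, the dual norm
   ||u||_* = sup_{N v <= 1} <u, v> being unfolded *)
Definition L_smooth (N : vec -> R) (L : R) (g : vec -> vec) : Prop :=
  forall x y v, dotv (g x - g y) v <= L * N (x - y) * N v.

Definition dom (h : vec -> \bar R) : set vec := [set x | (h x < +oo)%E].

Definition closed_fun (h : vec -> \bar R) : Prop :=
  closed [set p : vec * R | (h p.1 <= p.2%:E)%E].

Definition proper_fun (h : vec -> \bar R) : Prop :=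
  (forall x, h x != -oo)%E /\ exists x, (h x < +oo)%E.

Definition convex_efun (h : vec -> \bar R) : Prop :=
  forall x y : vec, forall t : R, 0 < t < 1 ->
    (h (t *: x + (1 - t) *: y)%R <= t%:E * h x + (1 - t)%:E * h y)%E.

Definition bounded_dom (N : vec -> R) (h : vec -> \bar R) : Prop :=
  exists M : R, forall x, dom h x -> N x <= M.

Definition strongly_convex_on (N : vec -> R) (D : set vec) (w : vec -> \bar R) : Prop :=
  forall x y : vec, forall t : R, D x -> D y -> 0 <= t <= 1 ->
    (w (t *: x + (1 - t) *: y)%R <=
       t%:E * w x + (1 - t)%:E * w y - (t * (1 - t) / 2 * N (x - y)%R ^+ 2)%R%:E)%E.

Definition lin (f : vec -> R) (g : vec -> vec) (x0 x : vec) : R :=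
  f x0 + dotv (g x0) (x - x0).

Definition halpha (h w : vec -> \bar R) (alpha : R) (x : vec) : \bar R :=
  (h x + alpha%:E * w x)%E.

Fixpoint ACP (ha : vec -> \bar R) (f : vec -> R) (g : vec -> vec) (y0 : vec)
    (p : nat -> vec) (zeta : nat -> R) (j : nat) (x : vec) : \bar R :=
  match j with
  | 0 => (ha x + (lin f g y0 x)%:E)%E
  | j'.+1 => ((1 - zeta j')%:E * ACP ha f g y0 p zeta j' x
              + (zeta j')%:E * (ha x + (lin f g (p j') x)%:E))%E
  end.

End Defs.

(* Main.v *)
Require Import Defs.
From HB Require Import structures.
From mathcomp Require Import all_boot all_order all_algebra.
From mathcomp Require Import all_classical all_reals all_analysis.
From mathcomp Require Import lra ring.
Import Order.TTheory GRing.Theory Num.Theory.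
Import numFieldNormedType.Exports.
Local Open Scope ring_scope.

Lemma my_arch0 (R : realType) (X c : R) : 0 <= c ->
  (forall m : nat, X <= c / (m.+2)%:R) -> X <= 0.
Proof.
move=> c0 H; rewrite leNgt; apply/negP => X0.
set m := Num.Def.trunc (c / X).
have h1 := truncnS_gt (c / X).
have h2 : (m.+1)%:R < (m.+2)%:R :> R by rewrite ltr_nat.
have h3 : c / X < (m.+2)%:R := lt_trans h1 h2.
have := H m.
have M0 : 0 < (m.+2)%:R :> R by rewrite ltr0n.
rewrite ler_pdivlMr // => h4.
rewrite ltr_pdivrMr // in h3.
lra.
Qed.

Lemma my_eps0 (R : realType) (X Y K : R) : 0 <= K ->
  (forall e, 0 < e -> X <= Y + e * K) -> X <= Y.
Proof.
move=> K0 H; apply/ler_addgt0Pr => e e0.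
have K1 : 0 < K + 1 by lra.
have := H (e / (K + 1)) (divr_gt0 e0 K1).
have : e / (K + 1) * K <= e.
  rewrite mulrAC ler_pdivrMr //; lra.
lra.
Qed.

Section Dot.
Context {R : realType} {n : nat}.
Implicit Types (u v x : 'rV[R]_n) (a : R).

Lemma my_dotvDl u v x : dotv (u + v) x = dotv u x + dotv v x.
Proof. by rewrite /dotv -big_split; apply: eq_bigr => i _; rewrite !mxE mulrDl. Qed.
Lemma my_dotvBl u v x : dotv (u - v) x = dotv u x - dotv v x.
Proof. by rewrite /dotv -sumrB; apply: eq_bigr => i _; rewrite !mxE mulrBl. Qed.
Lemma my_dotvZl a u x : dotv (a *: u) x = a * dotv u x.
Proof. by rewrite /dotv mulr_sumr; apply: eq_bigr => i _; rewrite !mxE mulrA. Qed.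
Lemma my_dotvDr u v x : dotv x (u + v) = dotv x u + dotv x v.
Proof. by rewrite /dotv -big_split; apply: eq_bigr => i _; rewrite !mxE mulrDr. Qed.
Lemma my_dotvBr u v x : dotv x (u - v) = dotv x u - dotv x v.
Proof. by rewrite /dotv -sumrB; apply: eq_bigr => i _; rewrite !mxE mulrBr. Qed.
Lemma my_dotvZr a u x : dotv x (a *: u) = a * dotv x u.
Proof. by rewrite /dotv mulr_sumr; apply: eq_bigr => i _; rewrite !mxE mulrCA. Qed.
End Dot.

Section Grad.
Context {R : realType} {n : nat}.
Implicit Types (u v x a b d : 'rV[R]_n).

Lemma my_normZ (N : 'rV[R]_n -> R) t x : is_norm N -> 0 <= t -> N (t *: x) = t * N x.
Proof. by case=> _ _ hZ _ t0; rewrite hZ ger0_norm. Qed.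

Lemma my_norm_ge0 (N : 'rV[R]_n -> R) x : is_norm N -> 0 <= N x.
Proof. by case. Qed.

Lemma my_grad_ineq (N : 'rV[R]_n -> R) f g a b : is_norm N -> convex_fun f ->
  has_gradient N f g -> f b + dotv (g b) (a - b) <= f a.
Proof.
move=> Nn cf hg.
set d := a - b.
have Nd0 := my_norm_ge0 N d Nn.
apply: (@my_eps0 R _ _ (N d) Nd0) => e e0.
have [del del0 Hdel] := hg b e e0.
set t := del / (del + N d).
have D0 : 0 < del + N d by lra.
have t0 : 0 < t by apply: divr_gt0.
have t1 : t <= 1 by rewrite /t ler_pdivrMr //; lra.
have Ntd : N (t *: d) < del.
  rewrite my_normZ //; last exact: ltW.
  have dd := mulr_gt0 del0 del0.
  rewrite /t mulrAC ltr_pdivrMr //; lra.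
have := Hdel _ Ntd; rewrite my_dotvZr my_normZ //; last exact: ltW.
move/ler_normlP => [hA hB].
have tt : 0 <= t <= 1 by rewrite (ltW t0) t1.
have := cf a b t tt.
have -> : t *: a + (1 - t) *: b = b + t *: d.
  by rewrite /d scalerBr scalerBl scale1r addrCA.
move=> hc.
have : t * (f b + dotv (g b) d - (f a + e * N d)) <= 0 by lra.
rewrite pmulr_rle0 //; lra.
Qed.

Lemma my_descent (N : 'rV[R]_n -> R) f g L a b : is_norm N -> convex_fun f ->
  has_gradient N f g -> 0 <= L -> L_smooth N L g ->
  f b <= f a + dotv (g a) (b - a) + L / 2 * N (b - a) ^+ 2.
Proof.
move=> Nn cf hg L0 Ls.
set d := b - a; set G := dotv (g a) d; set K := N d.
have K0 : 0 <= K := my_norm_ge0 N d Nn.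
suff : f b - f a - G - L / 2 * K ^+ 2 <= 0 by lra.
apply: (@my_arch0 R _ (L / 2 * K ^+ 2)); first by apply: mulr_ge0; [lra|apply: sqr_ge0].
move=> m.
set M := (m.+2)%:R : R.
have M0 : 0 < M by rewrite ltr0n.
set u := M^-1.
have u0 : 0 < u by rewrite invr_gt0.
set p := fun j : nat => a + (j%:R * u) *: d.
have claim : forall j : nat, f (p j) - f a <=
    (j%:R * u) * G + L * K ^+ 2 * (j%:R * (j%:R + 1)) * u ^+ 2 / 2.
  elim=> [|j IH].
    rewrite /p mul0r scale0r addr0 !mul0r mulr0 mul0r; lra.
  have r0 : 0 <= j%:R :> R by apply: ler0n.
  have hg1 := my_grad_ineq N f g (p j) (p j.+1) Nn cf hg.
  have e1 : p j - p j.+1 = (- u) *: d.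
    rewrite /p opprD addrACA subrr add0r -scalerBl; congr (_ *: _).
    rewrite -[in LHS]natr1 /=; rewrite mulrDl mul1r; lra.
  rewrite e1 my_dotvZr in hg1.
  have hL := Ls (p j.+1) a d.
  have e2 : p j.+1 - a = ((j%:R + 1) * u) *: d.
    by rewrite /p addrAC subrr add0r -natr1.
  rewrite e2 my_normZ // in hL; last by apply: mulr_ge0; lra.
  rewrite my_dotvBl -/G -/K in hL.
  have h3 := ler_wpM2l (ltW u0) hL.
  rewrite -natr1; lra.
have := claim m.+2.
have Mn : M != 0 by rewrite gt_eqF.
have -> : p m.+2 = b by rewrite /p -/M /u mulfV // scale1r /d addrC subrK.
have -> : L * K ^+ 2 * (M * (M + 1)) * u ^+ 2 / 2 = L / 2 * K ^+ 2 + L / 2 * K ^+ 2 / M.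
  by rewrite /u; field.
rewrite /u mulfV // mul1r; move: (L / 2 * K ^+ 2 / M) => cc; lra.
Qed.
End Grad.

Fixpoint my_ellf {R : realType} {n : nat} (f : 'rV[R]_n -> R) (g : 'rV[R]_n -> 'rV[R]_n)
  (y0 : 'rV[R]_n) (p : nat -> 'rV[R]_n) (lam : R) (k : nat) (z : 'rV[R]_n) : R :=
  match k with
  | 0 => lin f g y0 z
  | k'.+1 => (1 - lam) * my_ellf f g y0 p lam k' z + lam * lin f g (p k') z
  end.

Theorem propositionD1 (R : realType) (n : nat) (N : 'rV[R]_n -> R)
  (f : 'rV[R]_n -> R) (gf : 'rV[R]_n -> 'rV[R]_n) (L : R)
  (h w : 'rV[R]_n -> \bar R) (alpha : R)
  (y x xt s : nat -> 'rV[R]_n) :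
  is_norm N ->
  convex_fun f -> has_gradient N f gf -> 0 < L -> L_smooth N L gf ->
  closed_fun h -> proper_fun h -> convex_efun h -> bounded_dom N h ->
  closed_fun w -> (forall z, (0 <= w z)%E) -> strongly_convex_on N (dom h) w ->
  (exists C : R, forall z, dom h z -> (w z <= C%:E)%E) ->
  0 < alpha ->
  let lam := 2 * alpha / (alpha + Num.sqrt (alpha ^+ 2 + 4 * L * alpha)) in
  let ha := halpha h w alpha in
  dom h (y 0%N) ->
  s 0%N = gf (y 0%N) ->
  (forall k z, ((dotv (s k) (x k))%:E + ha (x k) <= (dotv (s k) z)%:E + ha z)%E) ->
  (forall k, xt k.+1 = (1 - lam) *: y k + lam *: x k) ->
  (forall k, s k.+1 = (1 - lam) *: s k + lam *: gf (xt k.+1)) ->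
  (forall k, y k.+1 = (1 - lam) *: y k + lam *: x k.+1) ->
  let Gamma := ACP ha f gf (y 0%N) (fun i => xt i.+1) (fun _ => lam) in
  let phi := fun z => ((f z)%:E + ha z)%E in
  let Delta := (phi (y 0%N) - Gamma 0%N (x 0%N))%E in
  forall (k : nat) (z : 'rV[R]_n),
    (phi (y k) - ((1 - lam) ^+ k)%:E * Delta <= Gamma k z)%E.
Proof.
move=> Nn cf hg L0 Ls _ [hninf [y1 hy1]] hcvx _ _ w0 wsc [C wC] a0 lam ha.
move=> dy0 s0 xmin xtE sE yE Gamma phi Delta.
set S := Num.sqrt (alpha ^+ 2 + 4 * L * alpha).
have S0 : 0 <= S by apply: sqrtr_ge0.
have S2 : S ^+ 2 = alpha ^+ 2 + 4 * L * alpha.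
  have LA : 0 <= 4 * L * alpha.
    rewrite -mulrA; apply: mulr_ge0; first by []. by apply: mulr_ge0; apply: ltW.
  by rewrite sqr_sqrtr //; apply: addr_ge0; [apply: sqr_ge0|].
have LA0 : 0 < 4 * L * alpha by rewrite -mulrA; apply: mulr_gt0; [by []|apply: mulr_gt0].
have Sa : alpha < S.
  rewrite ltNge; apply/negP => hS.
  have := ler_pM S0 S0 hS hS.
  rewrite -expr2 S2 -expr2; lra.
have lS : lam * (alpha + S) = 2 * alpha by rewrite /lam -/S mulfVK // gt_eqF //; lra.
have lam0 : 0 < lam by rewrite /lam -/S divr_gt0 //; lra.
have lam1 : lam < 1 by rewrite /lam -/S ltr_pdivrMr; lra.
have lE : 2 * L * lam + alpha = S.
  have h2 := congr1 (fun u => 2 * L * u) lS; simpl in h2.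
  have : (2 * L * lam + alpha) * (alpha + S) = S * (alpha + S).
    have := S2; rewrite expr2 => S2'; lra.
  by move/mulIf; apply; rewrite gt_eqF //; lra.
have lamE : L * lam ^+ 2 = (1 - lam) * alpha.
  have : 4 * L * (L * lam ^+ 2) = 4 * L * ((1 - lam) * alpha).
    have := S2; rewrite -lE !expr2 => S2'; lra.
  by move/mulfI; apply; rewrite gt_eqF //; lra.
have hfin z : dom h z -> h z = (fine (h z))%:E.
  by move=> hz; rewrite fineK // fin_numE hninf /= lt_eqF.
have wfin z : dom h z -> w z = (fine (w z))%:E.
  move=> hz; rewrite fineK // ge0_fin_numE //.
  exact: le_lt_trans (wC z hz) (ltry _).
set H := fun z => fine (h z).
set W := fun z => fine (w z).
set Ha := fun z => H z + alpha * W z.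
have haE z : dom h z -> ha z = (Ha z)%:E.
  by move=> hz; rewrite /ha /halpha (hfin z hz) (wfin z hz) -EFinM -EFinD.
have hainf z : ~ dom h z -> ha z = +oo%E.
  move=> hz; have hzE : h z = +oo%E.
    move: (hninf z) hz; rewrite /dom /=; case: (h z) => [r _ /(_ (ltry r))|//|//].
    by [].
  rewrite /ha /halpha hzE addye //.
  have : (0 <= alpha%:E * w z)%E by apply: mule_ge0; [rewrite lee_fin ltW|].
  by case: (alpha%:E * w z)%E.
have conv z1 z2 t : dom h z1 -> dom h z2 -> 0 < t < 1 ->
  dom h (t *: z1 + (1 - t) *: z2) /\
  Ha (t *: z1 + (1 - t) *: z2) <= t * Ha z1 + (1 - t) * Ha z2
     - alpha * (t * (1 - t) / 2 * N (z1 - z2) ^+ 2).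
  move=> d1 d2 ht.
  have hc := hcvx z1 z2 t ht.
  rewrite (hfin z1 d1) (hfin z2 d2) -!EFinM -EFinD in hc.
  have dv : dom h (t *: z1 + (1 - t) *: z2) := le_lt_trans hc (ltry _).
  split => //.
  rewrite (hfin _ dv) lee_fin in hc.
  have ht' : 0 <= t <= 1 by case/andP: ht => ? ?; apply/andP; split; lra.
  have wc := wsc z1 z2 t d1 d2 ht'.
  have Ee : forall a b c : R, (a%:E + b%:E - c%:E)%E = (a + b - c)%:E by [].
  rewrite (wfin z1 d1) (wfin z2 d2) (wfin _ dv) -!EFinM Ee lee_fin in wc.
  have := ler_wpM2l (ltW a0) wc.
  rewrite /Ha /H /W /=; lra.
pose ell := my_ellf f gf (y 0%N) (fun i => xt i.+1) lam.
have GammaE k z : Gamma k z = (ha z + (ell k z)%:E)%E.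
  rewrite /Gamma /ell; elim: k => [|k IH]; first by [].
  rewrite /= IH.
  case: (pselect (dom h z)) => hz.
    rewrite (haE z hz) /=; congr EFin; ring.
  rewrite (hainf z hz) !addye // !gt0_muley ?lte_fin ?subr_gt0 // addye //.
have ellE k z v : ell k z = ell k v + dotv (s k) (z - v).
  rewrite /ell; elim: k => [|k IH] /=.
    rewrite /lin s0 !my_dotvBr; ring.
  rewrite IH sE /lin !my_dotvBr !my_dotvDl !my_dotvZl; ring.
have xdom k : dom h (x k).
  case: (pselect (dom h (x k))) => // nd.
  have := xmin k y1.
  by rewrite (hainf _ nd) (haE _ hy1) addey // -EFinD leye_eq.
have ydom k : dom h (y k).
  elim: k => [//|k IH].
  have lt : 0 < 1 - lam < 1 by apply/andP; split; lra.
  have [+ _] := conv (y k) (x k.+1) (1 - lam) IH (xdom _) lt.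
  by rewrite yE (_ : 1 - (1 - lam) = lam) //; ring.
have base k v : dom h v -> Ha (x k) + ell k (x k) <= Ha v + ell k v.
  move=> dv; have := xmin k v.
  by rewrite (haE _ (xdom k)) (haE _ dv) -!EFinD lee_fin (ellE k v (x k)) my_dotvBr; lra.
have smin k z : dom h z ->
    Ha (x k) + ell k (x k) + alpha / 2 * N (z - x k) ^+ 2 <= Ha z + ell k z.
  move=> dz.
  set Q := N (z - x k) ^+ 2.
  have Q0 : 0 <= Q by apply: sqr_ge0.
  rewrite (ellE k z (x k)).
  suff : Ha (x k) + alpha / 2 * Q - Ha z - dotv (s k) (z - x k) <= 0 by lra.
  apply: (@my_arch0 R _ (alpha / 2 * Q)); first by apply: mulr_ge0 => //; lra.
  move=> m.
  set t := ((m.+2)%:R : R)^-1.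
  have t0 : 0 < t by rewrite /t invr_gt0 ltr0n.
  have t1 : t < 1 by rewrite /t invf_lt1 ?ltr0n // ltr1n.
  have [dv hv] := conv z (x k) t dz (xdom k) (introT andP (conj t0 t1)).
  have hb := base k _ dv.
  rewrite (ellE k (t *: z + (1 - t) *: x k) (x k)) in hb.
  have e1 : t *: z + (1 - t) *: x k - x k = t *: (z - x k).
    by rewrite scalerBr scalerBl scale1r addrCA addrAC subrr add0r.
  rewrite e1 my_dotvZr -/Q in hb hv.
  have : t * (Ha (x k) + alpha / 2 * Q - Ha z - dotv (s k) (z - x k) - alpha / 2 * Q * t) <= 0.
    lra.
  rewrite pmulr_rle0 //; lra.
set D0 := f (y 0%N) + Ha (y 0%N) - (Ha (x 0%N) + ell 0%N (x 0%N)).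
have P k : f (y k) + Ha (y k) - (1 - lam) ^+ k * D0 <= Ha (x k) + ell k (x k).
  elim: k => [|k IH]; first by rewrite expr0 mul1r /D0; lra.
  have l1 : 0 <= 1 - lam by lra.
  have lt : 0 < 1 - lam < 1 by apply/andP; split; lra.
  have [_ hv] := conv (y k) (x k.+1) (1 - lam) (ydom k) (xdom _) lt.
  rewrite (_ : 1 - (1 - lam) = lam) in hv; last by ring.
  rewrite -yE in hv.
  set Q := N (x k.+1 - x k) ^+ 2.
  have Q0 : 0 <= Q by apply: sqr_ge0.
  have sm := ler_wpM2l l1 (smin k (x k.+1) (xdom _)).
  rewrite -/Q in sm.
  have ih := ler_wpM2l l1 IH.
  have gi := ler_wpM2l l1 (my_grad_ineq N f gf (y k) (xt k.+1) Nn cf hg).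
  have de := my_descent N f gf L (xt k.+1) (y k.+1) Nn cf hg (ltW L0) Ls.
  have e1 : y k.+1 - xt k.+1 = lam *: (x k.+1 - x k).
    by rewrite yE xtE opprD addrACA subrr add0r -scalerBr.
  rewrite e1 (my_normZ N) // ?my_dotvZr ?my_dotvBr in de; last exact: ltW.
  have nq : (lam * N (x k.+1 - x k)) ^+ 2 = lam ^+ 2 * Q by rewrite exprMn.
  have nn : 0 <= alpha * ((1 - lam) * lam / 2 * N (y k - x k.+1) ^+ 2).
    apply: mulr_ge0; first lra.
    apply: mulr_ge0; last exact: sqr_ge0.
    apply: divr_ge0; [apply: mulr_ge0|]; lra.
  have LQ : L * lam ^+ 2 * Q = (1 - lam) * alpha * Q by rewrite lamE.
  have -> : ell k.+1 (x k.+1) = (1 - lam) * ell k (x k.+1) + lam * lin f gf (xt k.+1) (x k.+1) by [].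
  rewrite exprS.
  have gxt : dotv (gf (xt k.+1)) (xt k.+1) =
      (1 - lam) * dotv (gf (xt k.+1)) (y k) + lam * dotv (gf (xt k.+1)) (x k).
    by rewrite {2}xtE my_dotvDr !my_dotvZr.
  move: gi de; rewrite /lin !my_dotvBr => gi de.
  rewrite nq in de; lra.
move=> k z.
rewrite /Delta /phi (haE _ dy0) GammaE (haE _ (xdom 0%N)) (haE _ (ydom k)).
have Ee : forall a b c e : R, (a%:E - e%:E * (b%:E - c%:E))%E = (a - e * (b - c))%:E by [].
have Ee2 : forall a b : R, (a%:E + b%:E)%E = (a + b)%:E by [].
rewrite (Ee2 (f (y k))) (Ee2 (f (y 0%N))) (Ee2 (Ha (x 0%N))) Ee.
rewrite GammaE.
case: (pselect (dom h z)) => hz.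
  rewrite (haE _ hz) (Ee2 (Ha z)) lee_fin.
  have := base k z hz; have := P k; rewrite /D0; lra.
by rewrite (hainf _ hz) addye // leey.
Qed.
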